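(* Let $B=\{1,\dots,n\}$ be a set of bidders with nonnegative bids, and for $S\subseteq B$ let $R(S)$ be the revenue of a second-price auction (no reserve) among the bidders in $S$, i.e. the second-highest bid in $S$ (and $0$ if $|S|\le 1$). For $S\subseteq B$, let $\mathbf{b}_S\in\mathbb{R}^n$ be the vector whose first $|S|$ coordinates are the bids of the bidders in $S$ sorted in decreasing order and whose remaining coordinates are $0$. Suppose a revenue attribution $\mathbf{R}_S=(R_1,\dots,R_n)$ assigns to the bidders (in this sorted order) revenue shares satisfying, for every bid vector and every $S$: (1) Symmetry: bidders in $S$ with equal bids receive equal attribution; (2) Linearity: $\mathbf{R}_S = \mathbf{A}\,\mathbf{b}_S$ for a fixed $n\times n$ matrix $\mathbf{A}$ (independent of the bids and of $S$); (3) Conservation of revenue: $\sum_{i\in S} R_i = R(S)$. Then $\mathbf{A}$ is uniquely determined: its first column is $0$; its second column is $(\tfrac12,\tfrac12,0,\dots,0)^T$; and for $3\le j\le n$ its $j$-th column has entries $-\frac{1}{j(j-1)}$ in rows $1,\dots,j-1$, entry $\frac{1}{j}$ in row $j$, and $0$ in rows $j+1,\dots,n$. Equivalently, $\mathbf{A}\mathbf{e}_1=0$ and $\mathbf{A}\mathbf{e}_k=\frac1k\mathbf{e}_k$ for $k=2,\dots,n$, where $\mathbf{e}_k$ has ones in its first $k$ positions and zeros elsewhere.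
   Context: Bids are indexed by order statistics $b_{(1)}\ge b_{(2)}\ge\cdots$; the attribution vector $\mathbf{R}_S$ is indexed in the same sorted order, with entries outside the first $|S|$ positions corresponding to absent bidders. *)

(* Defs.v *)
From HB Require Import structures.
From mathcomp Require Import all_boot all_order all_algebra.
Set Implicit Arguments. Unset Strict Implicit. Unset Printing Implicit Defensive.
Import Order.TTheory GRing.Theory Num.Theory.
Local Open Scope ring_scope.

Definition sorted_bids (R : realFieldType) (n : nat) (b : 'I_n -> R)
    (S : {set 'I_n}) : seq R :=
  sort (fun x y : R => y <= x) [seq b i | i in S].

Definition bvec (R : realFieldType) (n : nat) (b : 'I_n -> R)
    (S : {set 'I_n}) : 'cV[R]_n :=
  \col_(k < n) nth 0 (sorted_bids b S) k.

(* R(S): second-highest bid in S, 0 if |S| <= 1. *)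
Definition second_price (R : realFieldType) (n : nat) (b : 'I_n -> R)
    (S : {set 'I_n}) : R :=
  nth 0 (sorted_bids b S) 1.

(* The claimed matrix (0-indexed: column j here is column j+1 of the paper). *)
Definition attrib_matrix (R : realFieldType) (n : nat) : 'M[R]_n :=
  \matrix_(i < n, j < n)
    (if (j == 0 :> nat) then 0
     else if (j == 1 :> nat) then (if (i <= 1)%N then 2%:R^-1 else 0)
     else if (i < j)%N then - ((j.+1 * j)%N%:R)^-1
     else if (i == j :> nat) then (j.+1)%:R^-1
     else 0).

(* Main.v *)
Require Import Defs.
From HB Require Import structures.
From mathcomp Require Import all_boot all_order all_algebra.
From mathcomp Require Import ring.
Import Order.TTheory GRing.Theory Num.Theory.
Local Open Scope ring_scope.

Section S.
Variables (R : realFieldType) (n k : nat).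
Hypothesis hk : (k <= n)%N.
Definition bk : 'I_n -> R := fun i => if (i < k)%N then 1 else 0.
Definition Sk : {set 'I_n} := [set i : 'I_n | (i < k)%N].

Let ge := fun x y : R => y <= x.
Lemma ge_trans : transitive ge.
Proof. by move=> x y z; rewrite /ge => h1 h2; apply: le_trans h2 h1. Qed.

Lemma map_cst (c : R) (g : nat -> R) (s : seq nat) :
  (forall x, x \in s -> g x = c) -> map g s = nseq (size s) c.
Proof.
elim: s => //= x s IH h.
rewrite (h x (mem_head x s)) IH // => y hy; apply: h; by rewrite inE hy orbT.
Qed.

Lemma sorted_nn m : sorted ge (nseq k (1:R) ++ nseq m 0).
Proof.
elim: k => [|j IH] /=.
  by elim: m => [|m IHm] //=; case: m IHm => //= m ->; rewrite /ge lexx.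
rewrite path_sortedE; last exact: ge_trans.
rewrite IH andbT all_cat !all_nseq /ge lexx ler01 ?orbT //.
Qed.

Lemma card_Sk : #|Sk| = k.
Proof.
rewrite -sum1_card /Sk.
rewrite (eq_bigl (fun i : 'I_n => true && (i < k)%N)); last by move=> i; rewrite inE.
rewrite (big_ord_narrow_cond hk) /= sum1_card card_ord //.
Qed.

Lemma sb_setT : sorted_bids bk setT = nseq k 1 ++ nseq (n - k) 0.
Proof.
rewrite /sorted_bids /image_mem enum_setT -enumT.
have -> : [seq bk i | i <- enum 'I_n] = [seq (if (m < k)%N then 1 else 0 : R) | m <- [seq val i | i <- enum 'I_n]].
  by rewrite -map_comp.
rewrite val_enum_ord -(subnKC hk) iotaD map_cat subnKC //.
rewrite (map_cst 1) ?(map_cst 0) ?size_iota.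
- apply: sorted_sort; [exact: ge_trans | exact: sorted_nn].
- by move=> m; rewrite mem_iota add0n => /andP [h _]; rewrite ltnNge h.
- by move=> m; rewrite mem_iota add0n => /andP [_ h]; rewrite h.
Qed.
Lemma sb_Sk : sorted_bids bk Sk = nseq k 1.
Proof.
rewrite /sorted_bids.
have -> : [seq bk i | i in Sk] = nseq k 1.
  rewrite /image_mem -card_Sk cardE -(size_map bk); apply/all_pred1P; apply/allP => x /mapP [i].
  by rewrite mem_enum /Sk inE /bk => h ->; rewrite h /=.
by apply: sorted_sort; [exact: ge_trans | have := sorted_nn 0; rewrite cats0].
Qed.

Definition Ek : 'cV[R]_n := \col_(i < n) (if (i < k)%N then 1 else 0).

Lemma bvec_setT : bvec bk setT = Ek.
Proof.
apply/matrixP => i j; rewrite !mxE sb_setT nth_cat size_nseq !nth_nseq.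
by case: ifP => //; case: ifP.
Qed.

Lemma bvec_Sk : bvec bk Sk = Ek.
Proof. by apply/matrixP => i j; rewrite !mxE sb_Sk nth_nseq. Qed.

Lemma sp_setT : second_price bk setT = if (1 < k)%N then 1 else 0.
Proof.
rewrite /second_price sb_setT nth_cat size_nseq !nth_nseq.
by case: ifP => //; case: ifP.
Qed.

Lemma sp_Sk : second_price bk Sk = if (1 < k)%N then 1 else 0.
Proof. by rewrite /second_price sb_Sk nth_nseq. Qed.

Lemma bk_ge0 i : 0 <= bk i.
Proof. by rewrite /bk; case: ifP => _; rewrite ?ler01 ?lexx. Qed.
End S.


Theorem proposition3 (R : realFieldType) (n : nat) (A : 'M[R]_n) :
  (forall b : 'I_n -> R, (forall i, 0 <= b i) ->
   forall S : {set 'I_n},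
     (* Symmetry: positions (in sorted order) of bidders of S with equal bids
        receive equal attribution *)
     (forall k l : 'I_n, (k < #|S|)%N -> (l < #|S|)%N ->
        bvec b S k ord0 = bvec b S l ord0 ->
        (A *m bvec b S) k ord0 = (A *m bvec b S) l ord0) /\
     (* Conservation of revenue *)
     \sum_(k < n | (k < #|S|)%N) (A *m bvec b S) k ord0 = second_price b S) ->
  A = attrib_matrix R n.
Proof.
move=> H.
have claim : forall k, (k <= n)%N -> forall i : 'I_n,
    (A *m Ek R n k) i ord0 = if (i < k)%N then (if (1 < k)%N then 1 else 0) / k%:R else 0.
  move=> k hk i.
  case: k hk i => [|k'] hk i.
    rewrite ltn0 !mxE big1 // => l _; rewrite mxE ltn0 mulr0 //.
  set k := k'.+1.
  have [sym1 sum1] := H (bk R n k) (@bk_ge0 R n k) (Sk n k).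
  have [sym2 sum2] := H (bk R n k) (@bk_ge0 R n k) setT.
  rewrite (@card_Sk n k hk) (@bvec_Sk R n k hk) (@sp_Sk R n k hk) in sym1 sum1.
  rewrite cardsT card_ord (@bvec_setT R n k hk) (@sp_setT R n k hk) in sym2 sum2.
  set v := A *m Ek R n k in sym1 sum1 sym2 sum2 *.
  set p := (if (1 < k)%N then 1 else 0 : R) in sum1 sum2 *.
  have hz : (0 < n)%N by apply: leq_trans hk.
  pose z : 'I_n := Ordinal hz.
  have vlow : forall l : 'I_n, (l < k)%N -> v l ord0 = v z ord0.
    move=> l hl; apply: sym1 => //; rewrite !mxE hl //.
  have Hs1 : v z ord0 = p / k%:R.
    move: sum1; rewrite (eq_bigr (fun _ => v z ord0)); last by move=> l hl; apply: vlow.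
    rewrite sumr_const.
    have -> : #|[pred l : 'I_n | (l < k)%N]| = k.
      rewrite -[RHS](@card_Sk n k hk); apply: eq_card => l; by rewrite /Sk !inE.
    move=> <-; rewrite -[v z ord0 *+ k]mulr_natr mulfK // pnatr_eq0 //.
  case: ifP => hik; first by rewrite vlow.
  have hkn : (k < n)%N by apply: leq_ltn_trans (ltn_ord i); rewrite leqNgt hik.
  pose w : 'I_n := Ordinal hkn.
  have vhigh : forall l : 'I_n, ~~ (l < k)%N -> v l ord0 = v w ord0.
    move=> l hl; apply: sym2 => //; rewrite !mxE (negbTE hl) ltnn //.
  have -> : v i ord0 = v w ord0 by apply: vhigh; rewrite hik.
  move: sum2; rewrite (bigID (fun l : 'I_n => (l < k)%N)) /=.
  rewrite (eq_bigl (fun l : 'I_n => (l < k)%N)); last by move=> l; rewrite ltn_ord.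
  rewrite sum1 (eq_bigl (fun l : 'I_n => ~~ (l < k)%N)); last by move=> l; rewrite ltn_ord.
  rewrite (eq_bigr (fun _ => v w ord0)); last by move=> l hl; apply: vhigh.
  rewrite sumr_const => /eqP; rewrite addrC -subr_eq0 addrK mulrn_eq0 => /orP [|/eqP //].
  move/eqP => h0; suff : (0 < #|[pred l : 'I_n | ~~ (l < k)%N]|)%N by rewrite h0.
  by apply/card_gt0P; exists w; rewrite inE /= ltnn.
apply/matrixP => i j.
have -> : A i j = (A *m Ek R n j.+1) i ord0 - (A *m Ek R n j) i ord0.
  rewrite !mxE -sumrB (bigD1 j) //= big1 ?addr0.
    by rewrite !mxE ltnSn ltnn mulr1 mulr0 subr0.
  move=> l hl; rewrite !mxE ltnS leq_eqVlt.
  have -> : (nat_of_ord l == j) = false by apply/negbTE.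
  by rewrite /= subrr.
rewrite (claim _ (ltn_ord j)) (claim _ (ltnW (ltn_ord j))) mxE.
case: j => [[|[|j]] hj] /=.
- by case: ifP => _; rewrite ?mul0r subrr.
- by rewrite mul0r if_same subr0 mul1r ltnS.
- case: (ltngtP i j.+2) => h.
  + rewrite (ltn_trans h (ltnSn _)) !mul1r natrM; field; by rewrite -!natrD !pnatr_eq0.
  + by rewrite ltnNge h subrr.
  + by rewrite h ltnSn subr0 mul1r.
Qed.
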